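(* For all integers $n\ge1$, $$\mathcal A\cap\gamma_{n+1}(\mathcal R)=\mathcal A_{2n-1}.$$
   Context: $\mathcal R=\mathcal R(\mathbb F_2)$ is the Riordan group of pairs $(g,f)$ of formal power series over $\mathbb F_2$ with $g=1+\cdots$, $f=t+\cdots$, product $(g_1,f_1)(g_2,f_2)=(g_1\cdot(g_2\circ f_1),\,f_2\circ f_1)$; it is a pro-2 group (inverse limit of its finite truncations) with the corresponding $t$-adic topology. $\mathcal A=\{(g,t)\}$ is the Appell subgroup and $\mathcal A_m=\{(g,t):g\equiv1\pmod{t^{m+1}}\}$. The lower central series is $\gamma_1(\mathcal R)=\mathcal R$, $\gamma_i(\mathcal R)=[\gamma_{i-1}(\mathcal R),\mathcal R]$, where $[X,Y]$ is the smallest closed subgroup containing all commutators $x^{-1}y^{-1}xy$, $x\in X$, $y\in Y$. *)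

(* Defs.v *)
From HB Require Import structures.
From mathcomp Require Import all_boot all_order all_algebra.
Set Implicit Arguments. Unset Strict Implicit. Unset Printing Implicit Defensive.
Import GRing.Theory.
Local Open Scope ring_scope.

Definition series := nat -> 'F_2.

Definition sone : series := fun n => (n == 0)%:R.
Definition st : series := fun n => (n == 1)%:R.

Definition smul (a b : series) : series :=
  fun n => \sum_(i < n.+1) a i * b (n - i)%N.

Fixpoint spow (f : series) (k : nat) : series :=
  match k with 0 => sone | k'.+1 => smul f (spow f k') end.

(* composition g o f, meaningful when f 0 = 0 *)
Definition scomp (g f : series) : series :=
  fun n => \sum_(k < n.+1) g k * spow f k n.

Definition rpair := (series * series)%type.

Definition isRiordan (x : rpair) : Prop :=
  x.1 0%N = 1 /\ x.2 0%N = 0 /\ x.2 1%N = 1.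

Definition rmul (x y : rpair) : rpair :=
  (smul x.1 (scomp y.1 x.2), scomp y.2 x.2).

Definition rid : rpair := (sone, st).

(* t-adic topology: x and y agree modulo t^N *)
Definition agree (N : nat) (x y : rpair) : Prop :=
  forall i, (i < N)%N -> x.1 i = y.1 i /\ x.2 i = y.2 i.

Definition rclosed (S : rpair -> Prop) : Prop :=
  forall x, isRiordan x -> (forall N, exists y, S y /\ agree N x y) -> S x.

Definition rsubgroup (H : rpair -> Prop) : Prop :=
  [/\ forall x, H x -> isRiordan x,
      H rid,
      forall x y, H x -> H y -> H (rmul x y) &
      forall x, H x -> exists z, H z /\ rmul x z = rid].

(* c is the commutator x^-1 y^-1 x y, i.e. the unique c with y x c = x y *)
Definition commset (X Y : rpair -> Prop) (c : rpair) : Prop :=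
  isRiordan c /\ exists x y, [/\ X x, Y y, isRiordan x, isRiordan y &
                                rmul y (rmul x c) = rmul x y].

Definition commgen (X Y : rpair -> Prop) (c : rpair) : Prop :=
  forall H, rsubgroup H -> rclosed H -> (forall d, commset X Y d -> H d) -> H c.

(* lcs k = gamma_{k+1}(R) *)
Fixpoint lcs (k : nat) : rpair -> Prop :=
  match k with 0 => isRiordan | k'.+1 => commgen (lcs k') isRiordan end.

Definition gamma (i : nat) : rpair -> Prop := lcs i.-1.

Definition isAppell (x : rpair) : Prop := isRiordan x /\ x.2 = st.

Definition appellm (m : nat) (x : rpair) : Prop :=
  isAppell x /\ forall i, (1 <= i <= m)%N -> x.1 i = 0.

(* Main.v *)
Require Import Defs.
From mathcomp Require Import all_boot all_order all_algebra.
From Stdlib Require Import FunctionalExtensionality.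
From mathcomp Require Import zify.
Set Implicit Arguments. Unset Strict Implicit. Unset Printing Implicit Defensive.
Import GRing.Theory.
Local Open Scope ring_scope.

Lemma F2P (x : 'F_2) : x = 0 \/ x = 1.
Proof. case: x => [[|[|k]] Hk]; [left|right|by []]; by apply/val_inj. Qed.
Lemma addxx (x : 'F_2) : x + x = 0.
Proof. by case: (F2P x) => ->; apply/eqP. Qed.
Lemma F2_neq (x y : 'F_2) : x <> y -> x + 1 = y.
Proof. by case: (F2P x) => ->; case: (F2P y) => -> //= _; apply/eqP. Qed.
Lemma F2_add0 (x y : 'F_2) : x + y = 0 -> x = y.
Proof. by case: (F2P x) => ->; case: (F2P y) => -> //= /eqP. Qed.
Lemma natF2 m : (m%:R : 'F_2) = (odd m)%:R.
Proof.
elim: m => [//|m IH]; rewrite mulrS IH /=.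
by case: (odd m) => /=; apply/eqP.
Qed.

Definition sadd (a b : series) : series := fun n => a n + b n.
Definition szero : series := fun _ => 0.
Definition mono (e : nat) : series := fun n => (n == e)%:R.
Definition vge (s : series) (V : nat) := forall i, (i < V)%N -> s i = 0.

Lemma seqext (a b : series) : (forall n, a n = b n) -> a = b.
Proof. by move=> H; apply: functional_extensionality. Qed.

Lemma saddC a b : sadd a b = sadd b a.
Proof. by apply: seqext => n; rewrite /sadd addrC. Qed.
Lemma saddA a b c : sadd a (sadd b c) = sadd (sadd a b) c.
Proof. by apply: seqext => n; rewrite /sadd addrA. Qed.
Lemma sadd0 a : sadd a szero = a.
Proof. by apply: seqext => n; rewrite /sadd addr0. Qed.
Lemma sadd0l a : sadd szero a = a.
Proof. by apply: seqext => n; rewrite /sadd add0r. Qed.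
Lemma saddxx a : sadd a a = szero.
Proof. by apply: seqext => n; rewrite /sadd addxx. Qed.
Lemma saddK a b : sadd a (sadd a b) = b.
Proof. by rewrite saddA saddxx sadd0l. Qed.

Lemma vge0 V : vge szero V. Proof. by []. Qed.
Lemma vgeD a b V : vge a V -> vge b V -> vge (sadd a b) V.
Proof. by move=> Ha Hb i Hi; rewrite /sadd Ha // Hb // addr0. Qed.
Lemma vgeW a V W : (W <= V)%N -> vge a V -> vge a W.
Proof. by move=> HW Ha i Hi; apply: Ha; apply: leq_trans HW. Qed.
Lemma vge_eq a b V : vge (sadd a b) V -> forall i, (i < V)%N -> a i = b i.
Proof. by move=> H i Hi; apply: F2_add0; apply: H. Qed.

Lemma sum_single n (F : nat -> 'F_2) m :
  (forall k, (k <= n)%N -> k != m -> F k = 0) ->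
  \sum_(k < n.+1) F k = if (m <= n)%N then F m else 0.
Proof.
move=> HF; case: ifP => Hm.
  rewrite (bigD1 (Ordinal (m := m) (n := n.+1) Hm)) //= big1 ?addr0 //.
  move=> i Hi; apply: HF; first by rewrite -ltnS.
  by apply: contra Hi => /eqP Hi; apply/eqP/val_inj.
apply: big1 => i _; apply: HF; first by rewrite -ltnS.
apply/eqP => Hi.
by move: (ltn_ord i); rewrite Hi ltnS Hm.
Qed.

Definition tr (n : nat) (a : series) : {poly 'F_2} := \poly_(i < n.+1) a i.

Lemma smul_poly a b n i : (i <= n)%N -> smul a b i = (tr n a * tr n b)`_i.
Proof.
move=> Hi; rewrite coefM /smul; apply: eq_bigr => j _.
rewrite /tr !coef_poly.
have Hj : (j < n.+1)%N by rewrite (leq_trans (ltn_ord j)) // ltnS.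
by rewrite Hj ifT // ltnS (leq_trans (leq_subr _ _) Hi).
Qed.

Lemma coef_mul_agree (p q r : {poly 'F_2}) n :
  (forall i, (i <= n)%N -> p`_i = q`_i) -> (p * r)`_n = (q * r)`_n.
Proof.
move=> H; rewrite !coefM; apply: eq_bigr => j _; rewrite H //.
by rewrite -ltnS.
Qed.

Lemma smulC a b : smul a b = smul b a.
Proof. by apply: seqext => n; rewrite !(smul_poly _ _ (leqnn n)) mulrC. Qed.

Lemma tr_smul a b n i : (i <= n)%N -> (tr n (smul a b))`_i = (tr n a * tr n b)`_i.
Proof. by move=> Hi; rewrite /tr coef_poly ltnS Hi (smul_poly _ _ Hi). Qed.

Lemma smulA a b c : smul a (smul b c) = smul (smul a b) c.
Proof.
apply: seqext => n; rewrite !(smul_poly _ _ (leqnn n)).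
have E1 := coef_mul_agree (tr n a) (tr_smul b c (n:=n)).
have E2 := coef_mul_agree (tr n c) (tr_smul a b (n:=n)).
by rewrite mulrC E1 E2 [in LHS]mulrC mulrA.
Qed.

Lemma smulDl a b c : smul (sadd a b) c = sadd (smul a c) (smul b c).
Proof.
apply: seqext => n; rewrite /smul /sadd -big_split /=.
by apply: eq_bigr => i _; rewrite mulrDl.
Qed.
Lemma smulDr a b c : smul c (sadd a b) = sadd (smul c a) (smul c b).
Proof. by rewrite smulC smulDl !(smulC c). Qed.

Lemma smul_monol e P n : smul (mono e) P n = if (e <= n)%N then P (n - e)%N else 0.
Proof.
rewrite /smul (@sum_single n (fun k => mono e k * P (n - k)%N) e); first by case: ifP => //; rewrite /mono eqxx mul1r.
by move=> k _ Hk; rewrite /mono (negbTE Hk) mul0r.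
Qed.

Lemma smul1l a : smul sone a = a.
Proof. by apply: seqext => n; rewrite (smul_monol 0) subn0. Qed.
Lemma smul1r a : smul a sone = a.
Proof. by rewrite smulC smul1l. Qed.
Lemma smul0l a : smul szero a = szero.
Proof. by apply: seqext => n; apply: big1 => i _; rewrite mul0r. Qed.

Lemma vge_mul a b A B : vge a A -> vge b B -> vge (smul a b) (A + B).
Proof.
move=> Ha Hb n Hn; apply: big1 => i _.
case: (ltnP i A) => HiA; first by rewrite Ha // mul0r.
rewrite Hb ?mulr0 //.
have := ltn_ord i; lia.
Qed.

Lemma lead_smul a b A B : vge a A -> vge b B -> smul a b (A + B)%N = a A * b B.
Proof.
move=> Ha Hb; rewrite /smul (@sum_single (A + B) (fun k => a k * b (A + B - k)%N) A).
  by rewrite leq_addr addKn.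
move=> k Hk HkA; case: (ltnP k A) => H; first by rewrite Ha // mul0r.
rewrite Hb ?mulr0 //.
have : (A < k)%N by rewrite ltn_neqAle eq_sym HkA H.
lia.
Qed.

Lemma vge1 F : F 0%N = 0 -> vge F 1.
Proof. by move=> H0 i; rewrite ltnS leqn0 => /eqP ->. Qed.

Lemma vge_spow F k : F 0%N = 0 -> vge (spow F k) k.
Proof.
move=> H0; elim: k => [|k IH] /=; first by move=> i.
by rewrite -add1n; apply: vge_mul => //; apply: vge1.
Qed.

Lemma spow_lead F k : F 0%N = 0 -> F 1%N = 1 -> spow F k k = 1.
Proof.
move=> H0 H1; elim: k => [//|k IH] /=.
by rewrite (_ : k.+1 = (1 + k)%N) // lead_smul ?H1 ?IH ?mul1r //; [apply: vge1 | apply: vge_spow].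
Qed.

Lemma spowD F i j : spow F (i + j) = smul (spow F i) (spow F j).
Proof. elim: i => [|i IH] /=; first by rewrite smul1l. by rewrite IH smulA. Qed.

Lemma scompDl a b F : scomp (sadd a b) F = sadd (scomp a F) (scomp b F).
Proof.
apply: seqext => n; rewrite /scomp /sadd -big_split /=.
by apply: eq_bigr => i _; rewrite mulrDl.
Qed.

Lemma scomp_mono m F : F 0%N = 0 -> scomp (mono m) F = spow F m.
Proof.
move=> H0; apply: seqext => n.
rewrite /scomp (@sum_single n (fun k => mono m k * spow F k n) m).
  case: ifP => H; first by rewrite /mono eqxx mul1r.
  by rewrite vge_spow // ltnNge H.
by move=> k _ Hk; rewrite /mono (negbTE Hk) mul0r.
Qed.

Lemma scomp_one F : F 0%N = 0 -> scomp sone F = sone.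
Proof. exact: (scomp_mono 0). Qed.

Lemma scomp_t F : F 0%N = 0 -> scomp st F = F.
Proof. by move=> H0; rewrite (scomp_mono 1 H0) /= smul1r. Qed.

Lemma spow_st k : spow st k = mono k.
Proof.
elim: k => [//|k IH] /=; rewrite IH; apply: seqext => n.
rewrite (smul_monol 1) /mono; case: n => [//|n] /=.
by rewrite subn1 /=.
Qed.

Lemma scomp_st q : scomp q st = q.
Proof.
apply: seqext => n; rewrite /scomp.
rewrite (@sum_single n (fun k => q k * spow st k n) n) ?leqnn.
  by rewrite spow_st /mono eqxx mulr1.
by move=> k _ Hk; rewrite spow_st /mono eq_sym (negbTE Hk) mulr0.
Qed.

Lemma scomp0 F : scomp szero F = szero.
Proof. by apply: seqext => n; apply: big1 => i _; rewrite mul0r. Qed.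

Lemma vge_scomp s F V : vge s V -> vge (scomp s F) V.
Proof.
move=> Hs i Hi; apply: big1 => j _; rewrite Hs ?mul0r //.
by apply: leq_ltn_trans Hi; rewrite -ltnS.
Qed.

Lemma scomp_at0 g F : scomp g F 0%N = g 0%N.
Proof. by rewrite /scomp big_ord1 /= mulr1. Qed.

Lemma smul_at0 a b : smul a b 0%N = a 0%N * b 0%N.
Proof. by rewrite /smul big_ord1. Qed.

Lemma T1 u s V : u 0%N = 1 -> vge (smul u s) V -> vge s V.
Proof.
move=> H0 H; suff: forall m, (m <= V)%N -> vge s m.
  by move=> /(_ V (leqnn V)).
elim=> [|m IH] HmV; first by move=> i.
have IHm := IH (ltnW HmV).
move=> i; rewrite ltnS leq_eqVlt => /orP [/eqP ->|]; last exact: IHm.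
have := H m HmV; rewrite smulC /smul big_ord_recr /= subnn H0 mulr1 big1 ?add0r //.
by move=> j _; rewrite IHm ?mul0r.
Qed.

Lemma T2 F s V : F 0%N = 0 -> F 1%N = 1 -> vge (scomp s F) V -> vge s V.
Proof.
move=> H0 H1 H; suff: forall m, (m <= V)%N -> vge s m.
  by move=> /(_ V (leqnn V)).
elim=> [|m IH] HmV; first by move=> i.
have IHm := IH (ltnW HmV).
move=> i; rewrite ltnS leq_eqVlt => /orP [/eqP ->|]; last exact: IHm.
have := H m HmV; rewrite /scomp big_ord_recr /= spow_lead // mulr1 big1 ?add0r //.
by move=> j _; rewrite IHm ?mul0r.
Qed.

Fixpoint solq (c : nat -> nat -> 'F_2) (r : series) (m : nat) : series :=
  match m with
  | 0 => fun _ => 0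
  | m'.+1 => fun i => if i == m' then r m' - \sum_(j < m') solq c r m' j * c m' j
                      else solq c r m' i
  end.

Lemma solq_stable c r m i : (i < m)%N -> solq c r m i = solq c r i.+1 i.
Proof.
elim: m => [//|m IH] Him /=.
case: eqP => [->|Hne] //=; first by rewrite eqxx.
rewrite IH //; move: Him; rewrite ltnS leq_eqVlt => /orP [/eqP //|//].
Qed.

Lemma tri_exists (c : nat -> nat -> 'F_2) (r : series) :
  exists q : series, forall i, \sum_(j < i) q j * c i j + q i = r i.
Proof.
exists (fun i => solq c r i.+1 i) => i /=; rewrite eqxx.
rewrite (eq_bigr (fun j : 'I_i => solq c r i j * c i j)).
  by rewrite addrC subrK.
by move=> j _; rewrite (solq_stable c r (ltn_ord j)).
Qed.

Lemma ser_div g w : g 0%N = 1 -> exists q, smul g q = w.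
Proof.
move=> H0; have [q Hq] := tri_exists (fun i j => g (i - j)%N) w.
exists q; apply: seqext => i; rewrite smulC /smul big_ord_recr /= subnn H0 mulr1.
exact: Hq.
Qed.

Lemma comp_surj F w : F 0%N = 0 -> F 1%N = 1 -> exists q, scomp q F = w.
Proof.
move=> H0 H1; have [q Hq] := tri_exists (fun i j => spow F j i) w.
exists q; apply: seqext => i; rewrite /scomp big_ord_recr /= spow_lead // mulr1.
exact: Hq.
Qed.

Ltac f2brute := repeat match goal with x : 'F_2 |- _ => case: (F2P x) => ->; clear x end; by apply/eqP.

Lemma saddAC a b c : sadd (sadd a b) c = sadd (sadd a c) b.
Proof. by rewrite -saddA (saddC b) saddA. Qed.
Lemma sadd_solve a b c : sadd a b = c -> b = sadd a c.
Proof. by move=> <-; rewrite saddK. Qed.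
Lemma sadd_split a b : a = sadd b (sadd a b).
Proof. by rewrite (saddC a) saddK. Qed.

Lemma V2a a b M : (1 <= M)%N -> a 0%N = 0 -> b 0%N = 0 -> vge (sadd a b) M ->
  forall j, vge (sadd (spow a j) (spow b j)) (M + j - 1).
Proof.
move=> HM Ha Hb Hab; elim=> [|j IH] /=; first by rewrite saddxx.
have -> : sadd (smul a (spow a j)) (smul b (spow b j)) =
          sadd (smul a (sadd (spow a j) (spow b j))) (smul (sadd a b) (spow b j)).
  rewrite smulDr smulDl; apply: seqext => n; rewrite /sadd.
  move: (smul a (spow a j) n) (smul a (spow b j) n) (smul b (spow b j) n) => x y z.
  f2brute.
apply: vgeD.
  apply: (vgeW (V := 1 + (M + j - 1))); first by lia.
  by apply: vge_mul => //; apply: vge1.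
apply: (vgeW (V := M + j)); first by lia.
by apply: vge_mul => //; apply: vge_spow.
Qed.

Lemma sq_sum u v : sadd (smul u u) (smul v v) = smul (sadd u v) (sadd u v).
Proof.
rewrite smulDr !smulDl (smulC v u); apply: seqext => n; rewrite /sadd.
move: (smul u u n) (smul u v n) (smul v v n) => x y z; f2brute.
Qed.

Lemma V2b a b M : (1 <= M)%N -> a 0%N = 0 -> b 0%N = 0 -> vge (sadd a b) M ->
  forall i, vge (sadd (spow a (i + i)) (spow b (i + i))) ((M + i - 1) + (M + i - 1)).
Proof.
move=> HM Ha Hb Hab i; rewrite !spowD sq_sum.
by apply: vge_mul; apply: V2a.
Qed.

Lemma P0 a F G V : (forall j, a j = 0 \/ vge (sadd (spow F j) (spow G j)) V) ->
  vge (sadd (scomp a F) (scomp a G)) V.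
Proof.
move=> H i Hi; rewrite /sadd /scomp -big_split /=; apply: big1 => j _.
case: (H j) => [->|Hv]; first by rewrite !mul0r addr0.
by rewrite -mulrDr; have := Hv i Hi; rewrite /sadd => ->; rewrite mulr0.
Qed.

Lemma riord_of (x : rpair) : x.1 0%N = 1 -> vge (sadd x.2 st) 2 -> isRiordan x.
Proof.
move=> H1 H2; split => //; split.
  by have := vge_eq H2 (i := 0) erefl.
by have := vge_eq H2 (i := 1) erefl.
Qed.

Lemma riord_vge (x : rpair) : isRiordan x -> vge (sadd x.2 st) 2.
Proof.
case=> _ [H0 H1] i; case: i => [|[|i]] // _; rewrite /sadd ?H0 ?H1; by apply/eqP.
Qed.

Definition NN (A B : nat) (x : rpair) :=
  [/\ isRiordan x, vge (sadd x.1 sone) A & vge (sadd x.2 st) B].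

Lemma NN_sub A B : (2 <= B)%N -> rsubgroup (NN A B).
Proof.
move=> HB; split.
- by move=> x [].
- split; first by split => //.
  + by rewrite saddxx.
  + by rewrite saddxx.
- move=> [g1 f1] [g2 f2] [[/= Hg1 [Hf10 Hf11]] HA1 HB1] [[/= Hg2 [Hf20 Hf21]] HA2 HB2].
  rewrite /rmul /=.
  have HBp : vge (sadd (scomp f2 f1) st) B.
    rewrite (sadd_split f2 st) scompDl scomp_t // saddAC.
    by apply: vgeD => //; apply: vge_scomp.
  split => //=; last first.
  + rewrite (sadd_split g2 sone) scompDl scomp_one // smulDr smul1r saddAC.
    apply: vgeD => //; rewrite -[A]add0n; apply: vge_mul => //.
    exact: vge_scomp.
  + apply: riord_of => /=; last exact: vgeW HBp.
    by rewrite smul_at0 scomp_at0 Hg1 Hg2 mulr1.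
- move=> [g f] [[/= Hg [Hf0 Hf1]] HA HB'].
  have [k Hk] := comp_surj st Hf0 Hf1.
  have [u Hu] := ser_div sone Hg.
  have [h Hh] := comp_surj u Hf0 Hf1.
  have HBk : vge (sadd k st) B.
    apply: (T2 Hf0 Hf1); rewrite scompDl Hk scomp_t // saddC //.
  have Hu0 : u 0%N = 1.
    by have := f_equal (fun s => s 0%N) Hu; rewrite smul_at0 Hg mul1r.
  exists (h, k); split; last by rewrite /rmul /= Hh Hu Hk.
  split => /=.
  + apply: riord_of => /=; last exact: vgeW HBk.
    by rewrite -(scomp_at0 h f) Hh.
  + apply: (T2 Hf0 Hf1); rewrite scompDl Hh scomp_one //.
    have -> : sadd u sone = smul u (sadd sone g).
      by rewrite smulDr smul1r smulC Hu.
    by rewrite -[A]add0n; apply: vge_mul => //; rewrite saddC.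
  + exact: HBk.
Qed.

Lemma NN_closed A B : rclosed (NN A B).
Proof.
move=> x Hx Happ; split => // i Hi.
  have [y [[_ Hy _] Hag]] := Happ i.+1.
  by have [Ha _] := Hag i (ltnSn i); rewrite /sadd Ha; apply: Hy.
have [y [[_ _ Hy] Hag]] := Happ i.+1.
by have [_ Ha] := Hag i (ltnSn i); rewrite /sadd Ha; apply: Hy.
Qed.

Lemma GJ a b M : (1 <= M)%N -> a 0%N = 0 -> b 0%N = 0 -> vge (sadd a b) M ->
  forall j, exists i,
    (j = (i + i)%N /\ vge (sadd (spow a j) (spow b j)) ((M + i - 1) + (M + i - 1))) \/
    (j = (i + i).+1%N /\ vge (sadd (spow a j) (spow b j)) (M + j - 1)).
Proof.
move=> HM Ha Hb Hab j; exists j./2.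
have Hj := odd_double_half j; rewrite -addnn in Hj.
case: (boolP (odd j)) => Ho; [rewrite Ho in Hj | rewrite (negbTE Ho) in Hj].
  by right; split; [rewrite -{1}Hj | apply: V2a].
left; have Ej : j = (j./2 + j./2)%N by rewrite -{1}Hj.
by split => //; rewrite {1 2}Ej; apply: V2b.
Qed.

Lemma CL N (x y c : rpair) :
  NN (2 * N) (2 * N + 2) x -> isRiordan y -> isRiordan c ->
  rmul y (rmul x c) = rmul x y -> NN (2 * N + 2) (2 * N + 4) c.
Proof.
case: x => g f; case: y => h k; case: c => q r.
move=> [[/= Hg0 [Hf0 Hf1]] HA HB] [/= Hh0 [Hk0 Hk1]] Hc.
have Hc' := Hc; case: Hc' => /= Hq0 [Hr0 Hr1].
rewrite /rmul /= => [[E1 E2]].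
have Hkst : vge (sadd k st) 2 by have := riord_vge (x := (h, k)); apply; split.
have Hfst : vge (sadd f st) 2 by apply: (vgeW (V := 2 * N + 2)) => //; lia.
have Hst0 : st 0%N = 0 by [].
have H12 : (1 <= 2)%N by [].
split => //=.
-
  set W := smul g (scomp (sadd q sone) f).
  have HW : smul g (scomp q f) = sadd W g.
    by rewrite /W scompDl scomp_one // smulDr smul1r -saddA saddxx sadd0.
  rewrite HW scompDl smulDr saddC in E1.
  have EW := sadd_solve E1.
  have KQ : vge (sadd (smul h (scomp g k)) (smul g (scomp h f))) (2 * N + 2).
    have -> : sadd (smul h (scomp g k)) (smul g (scomp h f)) =
      sadd (smul h (sadd (scomp (sadd g sone) k) (scomp (sadd g sone) st)))
           (smul g (sadd (scomp h f) (scomp h st))).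
      rewrite !scomp_st scompDl scomp_one // !smulDr !smul1r (smulC g h).
      apply: seqext => n; rewrite /sadd.
      move: (smul h (scomp g k) n) (h n) (smul h g n) (smul g (scomp h f) n) => a1 a2 a3 a4.
      f2brute.
    apply: vgeD; rewrite -[(2 * N + 2)%N]add0n; apply: vge_mul => //.
      apply: P0 => j; case: (ltnP j (2 * N)) => Hj; first by left; apply: HA.
      right; have [i [[Ej Hv]|[Ej Hv]]] := GJ H12 Hk0 Hst0 Hkst j;
        apply: vgeW Hv; lia.
    apply: P0 => j; right.
    have HM : (1 <= 2 * N + 2)%N by lia.
    have [i [[Ej Hv]|[Ej Hv]]] := GJ HM Hf0 Hst0 HB j; apply: vgeW Hv; lia.
  rewrite -EW in KQ.
  have K1 := T1 Hh0 KQ.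
  have K2 := T2 Hk0 Hk1 K1.
  have K3 := T1 Hg0 K2.
  exact: T2 Hf0 Hf1 K3.
-
  have Es : scomp (scomp (sadd r st) f) k = sadd (scomp f k) (scomp k f).
    by rewrite scompDl scomp_t // scompDl E2 saddC.
  have KR : vge (sadd (scomp f k) (scomp k f)) (2 * N + 4).
    have -> : sadd (scomp f k) (scomp k f) =
      sadd (sadd (scomp (sadd f st) k) (scomp (sadd f st) st))
           (sadd (scomp (sadd k st) f) (scomp (sadd k st) st)).
      rewrite !scomp_st !scompDl !scomp_t //.
      apply: seqext => n; rewrite /sadd.
      move: (scomp f k n) (scomp k f n) (k n) (f n) (st n) => a1 a2 a3 a4 a5.
      f2brute.
    apply: vgeD.
      apply: P0 => j; case: (ltnP j (2 * N + 2)) => Hj; first by left; apply: HB.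
      right; have [i [[Ej Hv]|[Ej Hv]]] := GJ H12 Hk0 Hst0 Hkst j;
        apply: vgeW Hv; lia.
    apply: P0 => j; case: (ltnP j 2) => Hj; first by left; apply: Hkst.
    right; have HM : (1 <= 2 * N + 2)%N by lia.
    have [i [[Ej Hv]|[Ej Hv]]] := GJ HM Hf0 Hst0 HB j; apply: vgeW Hv; lia.
  rewrite -Es in KR.
  exact: T2 Hf0 Hf1 (T2 Hk0 Hk1 KR).
Qed.

Lemma upper n x : lcs n x -> NN (2 * n) (2 * n + 2) x.
Proof.
elim: n x => [|n IH] x /=.
  by move=> Hx; split => //; exact: riord_vge.
move=> Hc.
have -> : (2 * n.+1 = 2 * n + 2)%N by lia.
have -> : (2 * n + 2 + 2 = 2 * n + 4)%N by lia.
apply: Hc; [apply: NN_sub; lia | exact: NN_closed |].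
move=> d [Hd [x0 [y0 [Hx0 Hy0 _ _ Heq]]]].
exact: CL (IH _ Hx0) Hy0 Hd Heq.
Qed.

Lemma st_mono : st = mono 1. Proof. by []. Qed.

Lemma mono_ne e i : (i != e)%N -> mono e i = 0.
Proof. by rewrite /mono => /negbTE ->. Qed.
Lemma mono_eq e : mono e e = 1.
Proof. by rewrite /mono eqxx. Qed.

Lemma KP e m : (2 <= e)%N ->
  (forall j, (m < j < m + e - 1)%N -> spow (sadd st (mono e)) m j = 0) /\
  spow (sadd st (mono e)) m (m + e - 1)%N = m%:R.
Proof.
move=> He; set k := sadd st (mono e).
have Hk0 : k 0%N = 0 by rewrite /k /sadd mono_ne ?addr0 //; lia.
elim: m => [|m [IH1 IH2]].
  split; first by move=> j /andP [Hj _]; rewrite /= /sone; case: j Hj.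
  change (mono 0 (0 + e - 1)%N = 0%:R); rewrite mono_ne //; lia.
have Hrec : forall j, spow k m.+1 j =
   (if (1 <= j)%N then spow k m (j - 1)%N else 0) +
   (if (e <= j)%N then spow k m (j - e)%N else 0).
  by move=> j; rewrite /= /k smulDl /sadd st_mono !smul_monol.
split.
  move=> j /andP [Hj1 Hj2]; rewrite Hrec.
  rewrite ifT; last by lia.
  rewrite IH1; last by apply/andP; split; lia.
  case: ifP => H; rewrite ?add0r //.
  by apply: vge_spow => //; lia.
rewrite Hrec ifT; last by lia.
rewrite ifT; last by lia.
have -> : (m.+1 + e - 1 - 1 = m + e - 1)%N by lia.
have -> : (m.+1 + e - 1 - e = m)%N by lia.
rewrite IH2 spow_lead //; last by rewrite /k /sadd mono_ne ?addr0 //; lia.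
by rewrite -mulrSr.
Qed.

Lemma Ed n (H : rpair -> Prop) :
  (forall x, appellm (2 * n - 1) x -> lcs n x) ->
  (forall d, commset (lcs n) isRiordan d -> H d) ->
  forall e m, (2 <= e)%N -> odd m -> (2 * n + 1 <= m)%N ->
  exists q, H (q, st) /\ vge (sadd (sadd q sone) (mono (m + e - 1))) (m + e).
Proof.
move=> IH Hcomm e m He Hm Hnm.
have [KP1 KP2] := KP m He.
set k := sadd st (mono e).
have Hk0 : k 0%N = 0 by rewrite /k /sadd mono_ne ?addr0 //; lia.
have Hk1 : k 1%N = 1 by rewrite /k /sadd mono_ne ?addr0 //; lia.
set P := spow k m.
set hh := sadd sone P.
set w := sadd sone (mono m).
have HP0 : forall i, (i < m)%N -> P i = 0 by move=> i Hi; apply: vge_spow.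
have Hh0 : hh 0%N = 1 by rewrite /hh /sadd HP0 ?addr0 //; lia.
have Hwk : scomp w k = hh by rewrite /w scompDl scomp_one // scomp_mono.
have [q Hq] := ser_div w Hh0.
set d := (m + e - 1)%N.
have Hv : vge (sadd (sadd q sone) (mono d)) (m + e).
  apply: (T1 Hh0); rewrite !smulDr Hq smul1r.
  have -> : smul hh (mono d) = sadd (mono d) (smul P (mono d)).
    by rewrite /hh smulDl smul1l.
  move=> i Hi.
  have Hpm : smul P (mono d) i = 0.
    apply: (vge_mul (A := m) (B := d)) => //; last by lia.
    by move=> j Hj; rewrite mono_ne //; lia.
  rewrite /sadd Hpm addr0 /w /hh /sadd.
  case: (ltngtP i m) => Him.
  - rewrite HP0 // !mono_ne //; try lia. by rewrite !addr0 addxx.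
  - case: (ltngtP i d) => Hid.
    + rewrite /P /k KP1; last by apply/andP; split; lia.
      rewrite !mono_ne; try lia. by rewrite !addr0 addxx.
    + lia.
    + rewrite Hid /d /P /k KP2 natF2 Hm mono_eq !mono_ne; try lia.
      by move: (sone _) => z; f2brute.
  - rewrite Him /P spow_lead // mono_eq mono_ne; last by lia.
    by move: (sone _) => z; f2brute.
have Hq0 : q 0%N = 1.
  have := Hv 0%N; rewrite /sadd mono_ne; last by lia.
  by rewrite addr0 => /(_ ltac:(lia)) /F2_add0.
exists q; split => //.
apply: Hcomm; split.
  by split => //.
exists (hh, st), (sone, k); split.
- apply: IH; split; first by split => //; split.
  move=> i /andP [Hi1 Hi2] /=; rewrite /hh /sadd HP0; last by lia.
  by rewrite addr0 /sone; case: i Hi1 Hi2.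
- by [].
- by split => //; split.
- by split => //; split.
- rewrite /rmul /= !scomp_st Hq Hwk smul1l smul1r scomp_t //.
Qed.

Lemma lower n x : appellm (2 * n - 1) x -> lcs n x.
Proof.
elim: n x => [|n IH] x.
  by move=> [[Hr _] _].
move=> [[Hr Hx2] Hx0] H Hsub Hcl Hcomm.
have [_ Hrid Hmul _] := Hsub.
have Ed' : forall d, (2 * n + 2 <= d)%N ->
    exists q, H (q, st) /\ vge (sadd (sadd q sone) (mono d)) d.+1.
  move=> d Hd; have Hdh := odd_double_half d; rewrite -muln2 in Hdh.
  case: (boolP (odd d)) => Hod.
    rewrite Hod /= in Hdh.
    have [|||q Hq] := Ed IH Hcomm (e := 3) (m := (d - 2)%N) => //.
    - by rewrite oddB ?Hod //; lia.
    - lia.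
    case: Hq => Hq1 Hq2; exists q; split => //; move: Hq2.
    have -> : (d - 2 + 3 - 1 = d)%N by lia.
    by have -> : (d - 2 + 3 = d.+1)%N by lia.
  rewrite (negbTE Hod) /= in Hdh.
  have [|||q Hq] := Ed IH Hcomm (e := 2) (m := (d - 1)%N) => //.
  - rewrite oddB ?(negbTE Hod) //; lia.
  - lia.
  case: Hq => Hq1 Hq2; exists q; split => //; move: Hq2.
  have -> : (d - 1 + 2 - 1 = d)%N by lia.
  by have -> : (d - 1 + 2 = d.+1)%N by lia.
case: x Hr Hx2 Hx0 => g f Hr /= Hx2 Hx0; subst f.
have Hg0 : g 0%N = 1 by case: Hr.
have Happ : forall N, exists p, H (p, st) /\ forall i, (i < N)%N -> p i = g i.
  elim=> [|N [p [Hp Hag]]]; first by exists sone; split.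
  case: (ltnP N (2 * n + 2)) => HN.
    exists sone; split => // i Hi.
    case: i Hi => [|i] Hi; first by rewrite Hg0.
    by rewrite Hx0 //; lia.
  case: (eqVneq (p N) (g N)) => HpN.
    exists p; split => // i; rewrite ltnS leq_eqVlt => /orP [/eqP ->|]; first by [].
    exact: Hag.
  have [q [Hq Hv]] := Ed' N HN.
  exists (smul p q); split.
    by have := Hmul _ _ Hp Hq; rewrite /rmul /= !scomp_st.
  have Eq : q = sadd (sadd (sadd (sadd q sone) (mono N)) sone) (mono N).
    apply: seqext => j; rewrite /sadd.
    by move: (q j) (sone j) (mono N j) => a1 a2 a3; f2brute.
  move: Hv Eq; move: (sadd (sadd q sone) (mono N)) => s Hv Eq.
  have Hps : vge (smul p s) N.+1 by rewrite -[N.+1]add0n; apply: vge_mul.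
  have Hp0 : p 0%N = 1 by rewrite Hag ?Hg0 //; lia.
  move=> i Hi; rewrite Eq !smulDr smul1r /sadd Hps // add0r.
  rewrite (smulC p) smul_monol.
  move: Hi; rewrite ltnS leq_eqVlt => /orP [/eqP ->|Hi].
    rewrite leqnn subnn Hp0; apply: F2_neq; exact/eqP.
  by rewrite leqNgt Hi addr0; apply: Hag.
apply: Hcl; first by [].
move=> N; have [p [Hp Hag]] := Happ N.
by exists (p, st); split => // i Hi; split => //=; rewrite Hag.
Qed.

Theorem lemma10 (n : nat) : (1 <= n)%N ->
  forall x : rpair, (isAppell x /\ gamma n.+1 x) <-> appellm (2 * n - 1) x.
Proof.
move=> Hn x; split.
  move=> [HA Hg]; have [_ Hv _] := upper Hg.
  split => // i /andP [Hi1 Hi2].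
  have := Hv i ltac:(lia); rewrite /sadd; case: i Hi1 Hi2 => [|i] //= _ _.
  by rewrite addr0.
move=> Hx; split; first by case: Hx.
exact: lower Hx.
Qed.
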